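(* Let $\alpha,\beta\in\mathbb{R}$ and let $m\ge 0$ be an integer. Let $b_0,\dots,b_m$ be the unique solution of the lower-triangular system $$\sum_{k=0}^{i}\frac{(-1)^{i-k}}{i-k+1}\,b_k=\frac{(-1)^{i+1}}{i+2}-\binom{-\alpha}{i+1},\qquad i=0,1,\dots,m,$$ and let $b'_0,\dots,b'_m$ be the unique solution of the same system with $\alpha$ replaced by $\beta$. Define $$c_i=\sum_{k=i}^{m}\binom{k}{i}(-1)^{k-i}\,b_k,\qquad d_i=\sum_{k=i}^{m}\binom{k}{i}(-1)^{k-i}\,b'_k,\qquad i=0,\dots,m.$$ Then for every integer $n\ge 0$, every $h>0$, and every real polynomial $f$ of degree at most $m$, $$\int_{-\alpha h}^{(n+\beta)h} f(t)\,dt \;=\; h\sum_{i=0}^{n} f(ih)\;+\;h\sum_{i=0}^{m} c_i\, f(ih)\;+\;h\sum_{i=0}^{m} d_i\, f\big((n-i)h\big).$$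
   Context: For real $x$ and integer $j\ge 0$, $\binom{x}{j}$ denotes the generalized binomial coefficient $x(x-1)\cdots(x-j+1)/j!$ (with $\binom{x}{0}=1$). The integral limits are oriented, so for negative $\alpha$ or $\beta$ the nodes $ih$ may lie outside the range of integration, and when $m>n$ some nodes $ih$ or $(n-i)h$ lie outside $[0,nh]$; the formula is to be read literally with the integrand evaluated at those points. In the system for $b_k$, the coefficient of $b_i$ in the $i$-th equation is $1$, so the system is uniquely solvable by forward substitution. *)

(* Defs.v *)
From Stdlib Require Import Reals Factorial.
From Coquelicot Require Import Coquelicot.
Open Scope R_scope.

Fixpoint falling (x : R) (j : nat) : R :=
  match j with
  | O => 1
  | S j' => falling x j' * (x - INR j')
  end.

Definition gbinom (x : R) (j : nat) : R := falling x j / INR (fact j).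

Definition solves_system (a : R) (m : nat) (b : nat -> R) : Prop :=
  forall i : nat, (i <= m)%nat ->
    sum_n_m (fun k => (-1) ^ (i - k) / INR (i - k + 1) * b k) 0 i
    = (-1) ^ (i + 1) / INR (i + 2) - gbinom (- a) (i + 1).

Definition corr_coef (m : nat) (b : nat -> R) (i : nat) : R :=
  sum_n_m (fun k => Binomial.C k i * (-1) ^ (k - i) * b k) i m.

Definition polyR (m : nat) (p : nat -> R) (t : R) : R :=
  sum_n (fun j => p j * t ^ j) m.

(* Main.v *)
Require Import Defs.
From Stdlib Require Import Reals Factorial Lra Lia FunctionalExtensionality.
From Coquelicot Require Import Coquelicot.
Open Scope R_scope.

Fixpoint pl (d : nat) (q : nat -> R) (t : R) : R :=
  match d with O => 0 | S d' => pl d' q t + q d' * t ^ d' end.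

Definition Low d (g : R -> R) := exists q, forall t, g t = pl d q t.

Lemma Low_ext d g g' : Low d g -> (forall t, g t = g' t) -> Low d g'.
Proof. intros [q H] E; exists q; intro t; rewrite <- E; auto. Qed.

Lemma pl_zero d t : pl d (fun _ => 0) t = 0.
Proof. induction d; simpl; [lra| rewrite IHd; ring]. Qed.

Lemma Low_zero d : Low d (fun _ => 0).
Proof. exists (fun _ => 0); intro; rewrite pl_zero; auto. Qed.

Lemma pl_ext d q q' t : (forall j, (j < d)%nat -> q j = q' j) -> pl d q t = pl d q' t.
Proof. induction d; intros H; simpl; auto. rewrite IHd by (intros; apply H; lia). rewrite H by lia; auto. Qed.

Lemma pl_lin d q q' c t : pl d (fun j => q j + c * q' j) t = pl d q t + c * pl d q' t.
Proof. induction d; simpl; [ring| rewrite IHd; ring]. Qed.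

Lemma Low_lin d A B c : Low d A -> Low d B -> Low d (fun t => A t + c * B t).
Proof. intros [q H] [q' H']; exists (fun j => q j + c * q' j); intro t; rewrite pl_lin, H, H'; auto. Qed.

Lemma Low_plus d A B : Low d A -> Low d B -> Low d (fun t => A t + B t).
Proof. intros HA HB; eapply Low_ext; [apply (Low_lin d A B 1 HA HB)|]; intro; simpl; ring. Qed.

Lemma Low_scal d A c : Low d A -> Low d (fun t => c * A t).
Proof. intros HA; eapply Low_ext; [apply (Low_lin d _ A c (Low_zero d) HA)|]; intro; simpl; ring. Qed.

Lemma Low_S d g : Low d g -> Low (S d) g.
Proof. intros [q H]; exists (fun j => if Nat.eqb j d then 0 else q j); intro t; simpl.
  rewrite Nat.eqb_refl, H. rewrite (pl_ext d q (fun j => if Nat.eqb j d then 0 else q j)). ring.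
  intros j Hj. destruct (Nat.eqb_spec j d); [lia|auto]. Qed.

Lemma Low_mono d d' g : (d <= d')%nat -> Low d g -> Low d' g.
Proof. induction 1; auto. intro; apply Low_S; auto. Qed.

Lemma Low_pow d : Low (S d) (fun t => t ^ d).
Proof. exists (fun j => if Nat.eqb j d then 1 else 0); intro t; simpl.
  rewrite Nat.eqb_refl, (pl_ext d _ (fun _ => 0)), pl_zero. ring.
  intros j Hj. destruct (Nat.eqb_spec j d); [lia|auto]. Qed.

Lemma pl_mul_t d q t : pl (S d) (fun j => match j with O => 0 | S j' => q j' end) t = pl d q t * t.
Proof. induction d; simpl in *. ring. rewrite IHd. simpl. ring. Qed.

Lemma Low_mul_t d g : Low d g -> Low (S d) (fun t => g t * t).
Proof. intros [q H]; eexists; intro t; rewrite pl_mul_t, H; reflexivity. Qed.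

Lemma Low_pow_aff d u c : Low (S d) (fun s => (u * s + c) ^ d).
Proof. induction d.
  - eapply Low_ext; [apply (Low_pow 0)|]; intro; simpl; ring.
  - assert (H1 := Low_scal _ _ u (Low_mul_t _ _ IHd)).
    assert (H2 := Low_S _ _ (Low_scal _ _ c IHd)).
    eapply Low_ext; [apply (Low_plus _ _ _ H1 H2)|]; intro; simpl; ring. Qed.

Lemma Low_aff d g u c : Low d g -> Low d (fun s => g (u * s + c)).
Proof. intros [q H]. eapply Low_ext with (g := fun s => pl d q (u * s + c)); [|intro; rewrite H; auto].
  clear H. induction d; simpl.
  - apply Low_zero.
  - apply Low_plus. apply Low_S; auto. apply Low_scal, Low_pow_aff. Qed.

Lemma pl_cont d q x : continuous (pl d q) x.
Proof. induction d; simpl.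
  - apply continuous_const.
  - apply (continuous_plus (pl d q) (fun t => q d * t ^ d)); auto.
    apply (continuous_mult (fun _ => q d) (fun t => t ^ d)). apply continuous_const.
    clear IHd. induction d; simpl. apply continuous_const.
    apply (continuous_mult (fun t => t) (fun t => t ^ d)); auto. apply continuous_id. Qed.

Lemma Low_cont d g x : Low d g -> continuous g x.
Proof. intros [q H]. apply functional_extensionality in H. subst. apply pl_cont. Qed.

Lemma Low_ex_RInt d g a b : Low d g -> ex_RInt g a b.
Proof. intros H. apply @ex_RInt_continuous. intros; exact (Low_cont d g z H). Qed.

Lemma RInt_lin (A B : R -> R) c y x : ex_RInt A y x -> ex_RInt B y x ->
  RInt (fun t => A t + c * B t) y x = RInt A y x + c * RInt B y x.
Proof. intros HA HB.
  pose proof (is_RInt_plus _ _ _ _ _ _ (RInt_correct A y x HA) (is_RInt_scal _ _ _ c _ (RInt_correct B y x HB))) as E.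
  apply is_RInt_unique in E. exact E. Qed.
Fixpoint dfall (x : R) (j : nat) : R :=
  match j with O => 0 | S j' => dfall x j' * (x - INR j') + falling x j' end.

Lemma falling_derive j x : is_derive (fun t => falling t j) x (dfall x j).
Proof. induction j; simpl.
  - apply (is_derive_const (K:=R_AbsRing) (V:=R_NormedModule) 1 x).
  - assert (Hg : is_derive (fun t => t - INR j) x 1) by (auto_derive; auto; ring).
    pose proof (is_derive_mult _ _ _ _ _ IHj Hg Rmult_comm) as E.
    replace (dfall x j * (x - INR j) + falling x j) with (plus (mult (dfall x j) (x - INR j)) (mult (falling x j) 1)).
    exact E. unfold plus, mult; simpl. ring. Qed.

Lemma falling_lead j : Low j (fun t => falling t j - t ^ j).
Proof. induction j.
  - eapply Low_ext; [apply (Low_zero 0)|]; intro; simpl; ring.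
  - pose proof (Low_mul_t _ _ IHj) as H1.
    pose proof (Low_S _ _ (Low_scal _ _ (- INR j) IHj)) as H2.
    pose proof (Low_scal _ _ (- INR j) (Low_pow j)) as H3.
    eapply Low_ext; [apply (Low_plus _ _ _ (Low_plus _ _ _ H1 H2) H3)|]; intro; simpl; ring. Qed.

Lemma falling_Low j : Low (S j) (fun t => falling t j).
Proof. eapply Low_ext; [apply (Low_plus _ _ _ (Low_S _ _ (falling_lead j)) (Low_pow j))|]; intro; simpl; ring. Qed.

Lemma dfall_lead j : Low j (fun t => dfall t (S j) - INR (S j) * t ^ j).
Proof. induction j.
  - eapply Low_ext; [apply (Low_zero 0)|]; intro; simpl; ring.
  - pose proof (Low_mul_t _ _ IHj) as H1.
    pose proof (Low_S _ _ (Low_scal _ _ (- INR (S j)) IHj)) as H2.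
    pose proof (Low_scal _ _ (- (INR (S j) * INR (S j))) (Low_pow j)) as H3.
    pose proof (falling_lead (S j)) as H4.
    eapply Low_ext; [apply (Low_plus _ _ _ (Low_plus _ _ _ (Low_plus _ _ _ H1 H2) H3) H4)|]; intro t.
    replace (dfall t (S (S j))) with (dfall t (S j) * (t - INR (S j)) + falling t (S j)) by reflexivity.
    rewrite !S_INR. simpl. ring. Qed.

Lemma dfall_Low j : Low (S j) (fun t => dfall t (S j)).
Proof. eapply Low_ext; [apply (Low_plus _ _ _ (Low_S _ _ (dfall_lead j)) (Low_scal _ _ (INR (S j)) (Low_pow j)))|]; intro; simpl; ring. Qed.

Lemma falling_pascal j t : falling (t + 1) (S j) - falling t (S j) = INR (S j) * falling t j.
Proof. induction j.
  - simpl; ring.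
  - replace (falling (t + 1) (S (S j))) with (falling (t+1) (S j) * (t + 1 - INR (S j))) by reflexivity.
    replace (falling t (S (S j))) with (falling t (S j) * (t - INR (S j))) by reflexivity.
    replace (falling (t+1) (S j)) with (falling t (S j) + INR (S j) * falling t j) by lra.
    replace (falling t (S j)) with (falling t j * (t - INR j)) by reflexivity.
    rewrite !S_INR. ring. Qed.

Lemma dfall_pascal j t : dfall (t + 1) (S (S j)) - dfall t (S (S j)) = INR (S (S j)) * dfall t (S j).
Proof.
  assert (D1 : is_derive (fun u => falling (u + 1) (S (S j)) - falling u (S (S j))) t
                 (dfall (t + 1) (S (S j)) - dfall t (S (S j)))).
  { assert (Hs : is_derive (fun u : R => u + 1) t 1) by (auto_derive; auto).
    pose proof (is_derive_comp (fun u => falling u (S (S j))) (fun u => u + 1) t _ _ (falling_derive _ (t+1)) Hs) as E1.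
    pose proof (is_derive_minus _ _ _ _ _ E1 (falling_derive (S (S j)) t)) as E2.
    replace (dfall (t + 1) (S (S j)) - dfall t (S (S j))) with
      (minus (scal 1 (dfall (t + 1) (S (S j)))) (dfall t (S (S j)))).
    exact E2. unfold minus, plus, opp, scal; simpl. unfold mult; simpl. ring. }
  assert (D2 : is_derive (fun u => INR (S (S j)) * falling u (S j)) t (INR (S (S j)) * dfall t (S j))).
  { apply is_derive_scal, falling_derive. }
  apply is_derive_unique in D1. apply is_derive_unique in D2.
  rewrite <- D1, <- D2. apply Derive_ext. intro u. apply falling_pascal. Qed.

Definition phi (j : nat) (t : R) : R := dfall t (S j) / INR (fact (S j)).

Lemma phi_Low j : Low (S j) (phi j).
Proof. eapply Low_ext; [apply (Low_scal _ _ (/ INR (fact (S j))) (dfall_Low j))|]; intro; unfold phi, Rdiv; ring. Qed.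

Lemma fact_pos n : 0 < INR (fact n).
Proof. apply lt_0_INR, lt_O_fact. Qed.

Lemma phi_lead j : Low j (fun t => INR (fact j) * phi j t - t ^ j).
Proof. eapply Low_ext; [apply (Low_scal _ _ (/ INR (S j)) (dfall_lead j))|]; intro t; unfold phi.
  replace (fact (S j)) with (S j * fact j)%nat by reflexivity. rewrite mult_INR.
  pose proof (fact_pos j). assert (0 < INR (S j)) by (apply lt_0_INR; lia).
  field. lra. Qed.

Lemma phi_diff j t : phi (S j) (t + 1) - phi (S j) t = phi j t.
Proof. unfold phi. replace (fact (S (S j))) with (S (S j) * fact (S j))%nat by reflexivity. rewrite mult_INR.
  pose proof (fact_pos (S j)). assert (0 < INR (S (S j))) by (apply lt_0_INR; lia).
  pose proof (dfall_pascal j t).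
  replace (dfall t (S j)) with ((dfall (t + 1) (S (S j)) - dfall t (S (S j))) / INR (S (S j))) by (rewrite H1; field; lra).
  field; lra. Qed.

Lemma phi_0 t : phi 0 t = 1.
Proof. unfold phi; simpl; field. Qed.

Lemma falling_0 j : falling 0 (S j) = 0.
Proof. induction j; simpl in *; [ring| rewrite IHj; ring]. Qed.

Lemma dfall_0 j : dfall 0 (S j) = (-1) ^ j * INR (fact j).
Proof. induction j. simpl; ring.
  replace (dfall 0 (S (S j))) with (dfall 0 (S j) * (0 - INR (S j)) + falling 0 (S j)) by reflexivity.
  rewrite IHj, falling_0. replace (fact (S j)) with (S j * fact j)%nat by reflexivity. rewrite mult_INR. simpl. ring. Qed.

Lemma phi_at0 j : phi j 0 = (-1) ^ j / INR (j + 1).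
Proof. unfold phi. rewrite dfall_0. replace (fact (S j)) with (S j * fact j)%nat by reflexivity. rewrite mult_INR.
  rewrite Nat.add_1_r. pose proof (fact_pos j). assert (0 < INR (S j)) by (apply lt_0_INR; lia). field. lra. Qed.

Lemma phi_RInt j y x : RInt (phi j) y x = gbinom x (S j) - gbinom y (S j).
Proof. apply is_RInt_unique.
  pose proof (is_RInt_derive (fun t => / INR (fact (S j)) * falling t (S j)) (phi j) y x) as E.
  replace (gbinom x (S j) - gbinom y (S j)) with
     (/ INR (fact (S j)) * falling x (S j) - / INR (fact (S j)) * falling y (S j)) by (unfold gbinom, Rdiv; ring).
  apply E.
  - intros u _. replace (phi j u) with (/ INR (fact (S j)) * dfall u (S j)) by (unfold phi, Rdiv; ring).
    apply is_derive_scal, falling_derive.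
  - intros u _. apply (Low_cont _ _ u (phi_Low j)).
Qed.

Fixpoint fdr (k : nat) (g : R -> R) (x : R) : R :=
  match k with O => g x | S k' => fdr k' g (x + 1) - fdr k' g x end.

Lemma fdr_lin k A B c x : fdr k (fun t => A t + c * B t) x = fdr k A x + c * fdr k B x.
Proof. revert x; induction k; intro x; simpl; auto. rewrite !IHk; ring. Qed.

Lemma fdr_shift k g c x : fdr k (fun s => g (s + c)) x = fdr k g (x + c).
Proof. revert x; induction k; intro x; simpl; auto. rewrite !IHk. f_equal. f_equal. ring. Qed.

Lemma fdr_zero k x : fdr k (fun _ => 0) x = 0.
Proof. revert x; induction k; intro x; simpl; auto. rewrite !IHk; ring. Qed.

Lemma fdr_phi k j x : (k <= j)%nat -> fdr k (phi j) x = phi (j - k) x.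
Proof. revert x; induction k; intros x H; simpl. rewrite Nat.sub_0_r; auto.
  rewrite !IHk by lia. replace (j - k)%nat with (S (j - S k)) by lia. apply phi_diff. Qed.

Lemma fdr_phi_big k j x : (j < k)%nat -> fdr k (phi j) x = 0.
Proof. intro H. induction H in x |- *.
  - simpl. rewrite !fdr_phi by lia. rewrite Nat.sub_diag, !phi_0. ring.
  - simpl. rewrite !IHle. ring. Qed.

Lemma sum_n_SR (a : nat -> R) n : @eq R (sum_n a (S n)) (sum_n a n + a (S n)).
Proof. exact (sum_Sn (G:=R_AbelianMonoid) a n). Qed.

Lemma sum_n_ext_R (a b : nat -> R) n : (forall k, (k <= n)%nat -> a k = b k) -> sum_n a n = sum_n b n.
Proof. intro H. induction n. rewrite !sum_O; apply H; lia.
  rewrite !sum_n_SR, IHn. rewrite H; auto. intros; apply H; lia. Qed.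

Lemma sum_n_lin (a b : nat -> R) c n : @eq R (sum_n (fun k => a k + c * b k) n) (sum_n a n + c * sum_n b n).
Proof. induction n. rewrite !sum_O; auto. rewrite !sum_n_SR, IHn. ring. Qed.

Lemma sum_n_zero n : @eq R (sum_n (fun _ => 0) n) 0.
Proof. induction n. rewrite sum_O; auto. rewrite sum_n_SR, IHn; ring. Qed.

Ltac toR := match goal with |- @eq _ ?a ?b => change (@eq R a b) end.

Definition Sm (e : nat -> R) (M : nat) (g : R -> R) : R := sum_n (fun k => e k * fdr k g 0) M.

Lemma Sm_lin e M A B c : Sm e M (fun t => A t + c * B t) = Sm e M A + c * Sm e M B.
Proof. unfold Sm. rewrite <- sum_n_lin. apply sum_n_ext_R; intros. rewrite fdr_lin; ring. Qed.

Lemma Sm_phi e M j : (j <= M)%nat ->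
  Sm e M (phi j) = sum_n_m (fun k => (-1) ^ (j - k) / INR (j - k + 1) * e k) 0 j.
Proof. intro H. induction H.
  - unfold Sm, sum_n. apply sum_n_m_ext_loc. intros k Hk.
    rewrite fdr_phi by lia. rewrite phi_at0. toR. ring.
  - unfold Sm in *. rewrite sum_n_SR, IHle, fdr_phi_big by lia. ring. Qed.

Lemma K_lemma M e x y :
  (forall i, (i <= M)%nat ->
     sum_n_m (fun k => (-1) ^ (i - k) / INR (i - k + 1) * e k) 0 i = gbinom x (i + 1) - gbinom y (i + 1)) ->
  forall d, (d <= S M)%nat -> forall g, Low d g -> Sm e M g = RInt g y x.
Proof. intros Hs d. induction d; intros Hd g Hg.
  - destruct Hg as [q Hq]. simpl in Hq. apply functional_extensionality in Hq. subst g.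
    unfold Sm. rewrite (sum_n_ext_R _ (fun _ => 0)) by (intros; rewrite fdr_zero; ring).
    rewrite sum_n_zero, RInt_const. unfold scal; simpl; unfold mult; simpl. ring.
  - destruct Hg as [q Hq].
    assert (HA : Low d (fun t => pl d q t + (- q d) * (INR (fact d) * phi d t - t ^ d))).
    { apply Low_lin. exists q; auto. apply phi_lead. }
    set (A := fun t => pl d q t + (- q d) * (INR (fact d) * phi d t - t ^ d)) in *.
    assert (Eg : g = fun t => A t + (q d * INR (fact d)) * phi d t).
    { apply functional_extensionality; intro t. rewrite Hq. unfold A. simpl. ring. }
    rewrite Eg, Sm_lin, RInt_lin.
    + rewrite IHd by (auto; lia). rewrite Sm_phi by lia. rewrite Hs by lia.
      rewrite phi_RInt, Nat.add_1_r. auto.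
    + eapply Low_ex_RInt; eauto.
    + eapply Low_ex_RInt; apply phi_Low.
Qed.

Lemma gbinom_pascal j x : gbinom (x + 1) (S j) - gbinom x (S j) = gbinom x j.
Proof. unfold gbinom. replace (falling (x + 1) (S j) / INR (fact (S j)) - falling x (S j) / INR (fact (S j)))
  with ((falling (x + 1) (S j) - falling x (S j)) / INR (fact (S j))) by (unfold Rdiv; ring).
  rewrite falling_pascal. replace (fact (S j)) with (S j * fact j)%nat by reflexivity. rewrite mult_INR.
  pose proof (fact_pos j). assert (0 < INR (S j)) by (apply lt_0_INR; lia). field. lra. Qed.

Lemma sum_n_shift (a : nat -> R) n : @eq R (sum_n a (S n)) (a O + sum_n (fun k => a (S k)) n).
Proof. induction n. rewrite sum_n_SR, !sum_O. auto.
  rewrite sum_n_SR, IHn, sum_n_SR. ring. Qed.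

Lemma sum_n_m_scal_R (a : nat -> R) c n m : @eq R (sum_n_m (fun k => c * a k) n m) (c * sum_n_m a n m).
Proof. exact (sum_n_m_mult_l (K:=R_Ring) c a n m). Qed.

Lemma plusR (x y : R) : plus x y = x + y.
Proof. reflexivity. Qed.

Lemma SL m a b : solves_system a m b -> forall G, Low (S (S m)) G ->
  Sm b m G - Sm b m (fun s => G (s + 1)) = RInt G (- a) (1 - a) - G 0.
Proof. intros Hb G HG.
  set (e := fun k => match k with O => 1 | S k' => - b k' end).
  assert (Hs : forall i, (i <= S m)%nat ->
     sum_n_m (fun k => (-1) ^ (i - k) / INR (i - k + 1) * e k) 0 i = gbinom (1 - a) (i + 1) - gbinom (- a) (i + 1)).
  { intros i Hi. destruct i.
    - rewrite sum_n_n. unfold e, gbinom. simpl. toR. field.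
    - rewrite sum_Sn_m by lia. rewrite <- sum_n_m_S.
      rewrite (sum_n_m_ext _ (fun k => (-1) * ((-1) ^ (i - k) / INR (i - k + 1) * b k))) by
        (intro k; simpl; unfold e; toR; ring).
      rewrite sum_n_m_scal_R. rewrite (Hb i) by lia.
      replace (1 - a) with (- a + 1) by ring. replace (S i + 1)%nat with (S (i + 1)) by lia.
      rewrite gbinom_pascal. replace (i + 2)%nat with (S i + 1)%nat by lia.
      replace (i + 1)%nat with (S i) by lia. unfold e. rewrite Nat.sub_0_r, plusR. toR. field. apply not_0_INR; lia. }
  pose proof (K_lemma (S m) e (1 - a) (- a) Hs (S (S m)) (le_n _) G HG) as K.
  rewrite <- K. unfold Sm. rewrite sum_n_shift. cbv beta.
  rewrite (sum_n_ext_R (fun k => e (S k) * fdr (S k) G 0)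
     (fun k => b k * fdr k G 0 + (-1) * (b k * fdr k (fun s => G (s + 1)) 0)))
    by (intros; unfold e; simpl; rewrite fdr_shift; ring).
  rewrite sum_n_lin. unfold e; simpl. ring.
Qed.
Lemma sum_n_scal_R (a : nat -> R) c n : @eq R (sum_n (fun k => c * a k) n) (c * sum_n a n).
Proof. exact (sum_n_mult_l (K:=R_Ring) c a n). Qed.

Definition Cb (k i : nat) : R := if Nat.leb i k then Binomial.C k i else 0.

Lemma Cb_pascal k i : Cb (S k) (S i) = Cb k i + Cb k (S i).
Proof. unfold Cb. destruct (Nat.leb_spec (S i) (S k)); destruct (Nat.leb_spec i k); destruct (Nat.leb_spec (S i) k); try lia.
  - rewrite <- pascal by lia. ring.
  - assert (i = k) by lia. subst. unfold Binomial.C. rewrite !Nat.sub_diag. simpl (INR (fact 0)).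
    pose proof (fact_pos k). pose proof (fact_pos (S k)). field. split; lra.
  - ring.
Qed.

Lemma Cb_0 k : Cb k 0 = 1.
Proof. unfold Cb. simpl. unfold Binomial.C. rewrite Nat.sub_0_r. simpl (INR (fact 0)). pose proof (fact_pos k). field. lra. Qed.

Lemma Cb_big k i : (k < i)%nat -> Cb k i = 0.
Proof. intro; unfold Cb. destruct (Nat.leb_spec i k); [lia|auto]. Qed.

Lemma fdr_bs k g x : fdr k g x = sum_n (fun i => Cb k i * (-1) ^ (k - i) * g (x + INR i)) k.
Proof. revert x; induction k; intro x.
  - rewrite sum_O, Cb_0. simpl. rewrite Rplus_0_r. toR. ring.
  - simpl fdr. rewrite !IHk. rewrite sum_n_shift. rewrite Cb_0.
    rewrite (sum_n_ext_R (fun k0 => Cb (S k) (S k0) * (-1) ^ (S k - S k0) * g (x + INR (S k0)))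
      (fun i => Cb k i * (-1) ^ (k - i) * g (x + 1 + INR i) + 1 * (Cb k (S i) * (-1) ^ (k - i) * g (x + INR (S i)))))
      by (intros; rewrite Cb_pascal, S_INR; simpl (S k - S _)%nat; replace (x + (INR k0 + 1)) with (x + 1 + INR k0) by ring; ring).
    rewrite sum_n_lin.
    assert (E : @eq R (sum_n (fun i => Cb k i * (-1) ^ (k - i) * g (x + INR i)) k)
                (sum_n (fun i => Cb k i * (-1) ^ (k - i) * g (x + INR i)) (S k))).
    { rewrite sum_n_SR, Cb_big by lia. rewrite !Rmult_0_l, Rplus_0_r. reflexivity. }
    rewrite E, sum_n_shift, Cb_0.
    rewrite (sum_n_ext_R (fun k0 => Cb k (S k0) * (-1) ^ (k - S k0) * g (x + INR (S k0)))
       (fun i => -1 * (Cb k (S i) * (-1) ^ (k - i) * g (x + INR (S i))))).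
    + rewrite sum_n_scal_R. rewrite !Nat.sub_0_r. 
      replace (x + INR 0) with x by (simpl; ring). simpl pow. toR. ring.
    + intros i Hi. destruct (Nat.leb_spec (S i) k).
      * replace (k - i)%nat with (S (k - S i)) by lia. simpl pow. ring.
      * rewrite Cb_big by lia. ring.
Qed.

Lemma sum_exch (a : nat -> nat -> R) m :
  @eq R (sum_n (fun k => sum_n (fun i => a i k) k) m) (sum_n (fun i => sum_n_m (fun k => a i k) i m) m).
Proof. induction m.
  - rewrite !sum_O, sum_n_n. auto.
  - rewrite sum_n_SR, IHm, (sum_n_SR (fun i => sum_n_m (fun k => a i k) i (S m))), sum_n_n.
    rewrite (sum_n_ext_R (fun i => sum_n_m (fun k => a i k) i (S m)) (fun i => sum_n_m (fun k => a i k) i m + 1 * a i (S m))).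
    + rewrite sum_n_lin, sum_n_SR. toR. ring.
    + intros i Hi. rewrite sum_n_Sm by lia. rewrite plusR. toR. ring.
Qed.


Lemma S_corr m b g : Sm b m g = sum_n (fun i => corr_coef m b i * g (INR i)) m.
Proof. unfold Sm.
  rewrite (sum_n_ext_R _ (fun k => sum_n (fun i => b k * (Cb k i * (-1) ^ (k - i) * g (INR i))) k)).
  - rewrite sum_exch. apply sum_n_ext_R. intros i Hi. unfold corr_coef.
    rewrite (Rmult_comm _ (g (INR i))), <- sum_n_m_scal_R.
    apply sum_n_m_ext_loc. intros k Hk. unfold Cb. destruct (Nat.leb_spec i k); [|lia]. toR. ring.
  - intros k Hk. rewrite fdr_bs, <- sum_n_scal_R. apply sum_n_ext_R. intros. rewrite Rplus_0_l. auto.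
Qed.

Lemma dsurj d : forall f, Low d f -> exists F, Low (S d) F /\ forall t, f t = F (t + 1) - F t.
Proof. induction d; intros f [q Hq].
  - exists (fun _ => 0). split. apply Low_zero. intro t; rewrite Hq; simpl; ring.
  - assert (HA : Low d (fun t => pl d q t + (- q d) * (falling t d - t ^ d))).
    { apply Low_lin. exists q; auto. apply falling_lead. }
    destruct (IHd _ HA) as [F1 [HF1 EF1]].
    exists (fun t => F1 t + (q d / INR (S d)) * falling t (S d)). split.
    + apply Low_lin. apply Low_S; auto. apply falling_Low.
    + intro t. rewrite Hq. simpl pl. 
      pose proof (EF1 t) as E. pose proof (falling_pascal d t) as P.
      assert (0 < INR (S d)) by (apply lt_0_INR; lia).
      replace (F1 (t + 1) + q d / INR (S d) * falling (t + 1) (S d) - (F1 t + q d / INR (S d) * falling t (S d)))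
        with ((F1 (t+1) - F1 t) + q d / INR (S d) * (falling (t + 1) (S d) - falling t (S d))) by ring.
      rewrite <- E, P. field. lra.
Qed.

Lemma RInt_aff d F u c x y : Low d F ->
  RInt (fun s => F (u * s + c)) x y * u = RInt F (u * x + c) (u * y + c).
Proof. intro HF.
  assert (E : RInt (fun s => u * F (u * s + c)) x y = RInt F (u * x + c) (u * y + c)).
  { exact (RInt_comp_lin F u c x y (Low_ex_RInt _ _ _ _ HF)). }
  assert (E2 : RInt (fun s => u * F (u * s + c)) x y = u * RInt (fun s => F (u * s + c)) x y).
  { exact (RInt_scal (fun s => F (u * s + c)) x y u (Low_ex_RInt _ _ _ _ (Low_aff _ _ u c HF))). }
  rewrite <- E, E2. ring. Qed.

Lemma ChaslesR d F p q r : Low d F -> RInt F p q + RInt F q r = RInt F p r.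
Proof. intro HF. exact (RInt_Chasles F p q r (Low_ex_RInt _ _ _ _ HF) (Low_ex_RInt _ _ _ _ HF)). Qed.

Lemma RInt_pointR (F : R -> R) p : RInt F p p = 0.
Proof. exact (RInt_point p F). Qed.

Definition Cf m a a' b b' (f : R -> R) : R :=
  f 0 + Sm b m f + Sm b' m (fun s => f (- s)) - RInt f (- a) a'.

Lemma Cshift m a a' b b' : solves_system a m b -> solves_system a' m b' ->
  forall F, Low (S (S m)) F -> Cf m a a' b b' (fun s => F (s + 1)) = Cf m a a' b b' F.
Proof. intros Hb Hb' F HF. unfold Cf.
  pose proof (SL m a b Hb F HF) as E1.
  set (G := fun s => F (-1 * s + 1)).
  assert (HG : Low (S (S m)) G) by (apply Low_aff; auto).
  pose proof (SL m a' b' Hb' G HG) as E2.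
  assert (EG1 : (fun s => G (s + 1)) = (fun s => F (- s))).
  { apply functional_extensionality; intro s; unfold G; f_equal; ring. }
  assert (EG2 : (fun s => F (- s + 1)) = G).
  { apply functional_extensionality; intro s; unfold G; f_equal; ring. }
  rewrite EG1 in E2. rewrite EG2.
  pose proof (RInt_aff _ F (-1) 1 (- a') (1 - a') HF) as R1. fold G in R1.
  pose proof (RInt_aff _ F 1 1 (- a) a' HF) as R2.
  replace (fun s => F (1 * s + 1)) with (fun s => F (s + 1)) in R2
    by (apply functional_extensionality; intro s; f_equal; ring).
  replace (-1 * - a' + 1) with (a' + 1) in R1 by ring.
  replace (-1 * (1 - a') + 1) with a' in R1 by ring.
  replace (1 * - a + 1) with (1 - a) in R2 by ring.
  replace (1 * a' + 1) with (a' + 1) in R2 by ring.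
  unfold G in E2 at 3. 
  replace (-1 * 0 + 1) with (0 + 1) in E2 by ring.
  pose proof (ChaslesR _ F (- a) (1 - a) (a' + 1) HF) as C1.
  pose proof (ChaslesR _ F (- a) a' (a' + 1) HF) as C2.
  pose proof (ChaslesR _ F a' (a' + 1) a' HF) as C3. rewrite RInt_pointR in C3.
  lra.
Qed.

Lemma Cf_lin m a a' b b' d A B c : Low d A -> Low d B ->
  Cf m a a' b b' (fun t => A t + c * B t) = Cf m a a' b b' A + c * Cf m a a' b b' B.
Proof. intros HA HB. unfold Cf. rewrite Sm_lin.
  rewrite (Sm_lin b' m (fun s => A (- s)) (fun s => B (- s)) c).
  rewrite RInt_lin by (eapply Low_ex_RInt; eauto). ring. Qed.

Lemma C0 m a a' b b' : solves_system a m b -> solves_system a' m b' ->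
  forall f, Low (S m) f -> Cf m a a' b b' f = 0.
Proof. intros Hb Hb' f Hf. destruct (dsurj _ f Hf) as [F [HF EF]].
  apply functional_extensionality in EF. subst f.
  assert (HF1 : Low (S (S m)) (fun t => F (t + 1))).
  { eapply Low_ext; [apply (Low_aff _ _ 1 1 HF)|]; intro t; simpl; rewrite Rmult_1_l; reflexivity. }
  replace (fun t => F (t + 1) - F t) with (fun t => F (t + 1) + (-1) * F t)
    by (apply functional_extensionality; intro; ring).
  rewrite (Cf_lin m a a' b b' (S (S m))) by auto.
  rewrite Cshift by auto. ring.
Qed.

Lemma main1 m a a' b b' : solves_system a m b -> solves_system a' m b' ->
  forall f, Low (S m) f -> forall n,
  RInt f (- a) (INR n + a') = sum_n (fun i => f (INR i)) n + Sm b m f + Sm b' m (fun s => f (INR n - s)).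
Proof. intros Hb Hb' f Hf n. induction n.
  - pose proof (C0 m a a' b b' Hb Hb' f Hf) as E. unfold Cf in E. rewrite sum_O. simpl INR.
    replace (0 + a') with a' by ring.
    replace (fun s => f (0 - s)) with (fun s => f (- s)) by (apply functional_extensionality; intro; apply f_equal; ring).
    lra.
  - set (G := fun s => f (-1 * s + INR (S n))).
    assert (HG : Low (S (S m)) G) by (apply Low_S, Low_aff; auto).
    pose proof (SL m a' b' Hb' G HG) as E.
    assert (EG1 : (fun s => G (s + 1)) = (fun s => f (INR n - s))).
    { apply functional_extensionality; intro s; unfold G; rewrite S_INR; f_equal; ring. }
    assert (EG2 : (fun s => f (INR (S n) - s)) = G).
    { apply functional_extensionality; intro s; unfold G; f_equal; ring. }
    rewrite EG1 in E. rewrite EG2.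
    pose proof (RInt_aff _ f (-1) (INR (S n)) (- a') (1 - a') Hf) as R1. fold G in R1.
    replace (-1 * - a' + INR (S n)) with (INR (S n) + a') in R1 by ring.
    replace (-1 * (1 - a') + INR (S n)) with (INR n + a') in R1 by (rewrite S_INR; ring).
    unfold G in E at 3. replace (-1 * 0 + INR (S n)) with (INR (S n)) in E by ring.
    pose proof (ChaslesR _ f (- a) (INR n + a') (INR (S n) + a') Hf) as C1.
    pose proof (ChaslesR _ f (INR n + a') (INR (S n) + a') (INR n + a') Hf) as C2.
    rewrite RInt_pointR in C2.
    rewrite sum_n_SR. lra.
Qed.

Lemma polyR_pl m p t : polyR m p t = pl (S m) p t.
Proof. unfold polyR. induction m.
  - rewrite sum_O. simpl. ring.
  - rewrite sum_n_SR, IHm. simpl. ring. Qed.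

Theorem mainTheorem1 (alpha beta : R) (m : nat) (b b' : nat -> R) :
  solves_system alpha m b ->
  solves_system beta m b' ->
  forall (n : nat) (h : R), 0 < h ->
  forall p : nat -> R,
    let f := polyR m p in
    RInt f (- alpha * h) ((INR n + beta) * h)
    = h * sum_n (fun i => f (INR i * h)) n
      + h * sum_n (fun i => corr_coef m b i * f (INR i * h)) m
      + h * sum_n (fun i => corr_coef m b' i * f ((INR n - INR i) * h)) m.
Proof.
  intros Hb Hb' n h Hh p f.
  assert (Hf : Low (S m) f) by (exists p; intro; apply polyR_pl).
  assert (Hf1 : Low (S m) (fun s => f (h * s))).
  { eapply Low_ext; [apply (Low_aff _ _ h 0 Hf)|]; intro t; cbv beta; rewrite Rplus_0_r; reflexivity. }
  pose proof (main1 m alpha beta b b' Hb Hb' _ Hf1 n) as M.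
  rewrite !S_corr in M.
  pose proof (RInt_aff _ f h 0 (- alpha) (INR n + beta) Hf) as R1.
  replace (fun s => f (h * s + 0)) with (fun s => f (h * s)) in R1
    by (apply functional_extensionality; intro; apply f_equal; ring).
  replace (h * - alpha + 0) with (- alpha * h) in R1 by ring.
  replace (h * (INR n + beta) + 0) with ((INR n + beta) * h) in R1 by ring.
  rewrite <- R1, M.
  rewrite (sum_n_ext_R (fun i => f (INR i * h)) (fun i => f (h * INR i))) by (intros; apply f_equal; ring).
  rewrite (sum_n_ext_R (fun i => corr_coef m b i * f (INR i * h)) (fun i => corr_coef m b i * f (h * INR i)))
    by (intros; apply f_equal; apply f_equal; ring).
  rewrite (sum_n_ext_R (fun i => corr_coef m b' i * f ((INR n - INR i) * h))
     (fun i => corr_coef m b' i * f (h * (INR n - INR i)))) by (intros; apply f_equal; apply f_equal; ring).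
  toR. ring.
Qed.
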